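(* Consider $\min_{x\in X}f(x)$, $f(x)=\mathbb{E}[F(x,\xi)]$, with $F:\mathcal{D}\times\Omega\to\mathbb{R}$, $\mathcal{D}\subseteq\mathbb{R}^n$ open, $X\subset\mathcal{D}$ nonempty closed convex, $F(\cdot,\xi)$ convex on $\mathcal{D}$ for all $\xi$, $\mathbb{E}[F(x,\xi)]$ finite on $\mathcal{D}$. Let $f$ be differentiable over $X$ with $L$-Lipschitz gradient and strongly convex with constant $\eta>0$, let $X$ be compact and $D=\max_{x,y\in X}\|x-y\|$, and assume $\mathbb{E}[\|w_k\|^2\mid\mathcal{F}_k]\le\nu^2$ a.s. for all $k$. Then in the cascading steplength scheme (defined in the context), $K_t$ is finite for all $t\ge0$.
   Context: Iteration: $x_{k+1}=\Pi_X(x_k-\gamma_k(\nabla f(x_k)+w_k))$, $w_k=\nabla_xF(x_k,\xi_k)-\nabla f(x_k)$, $x_0\in X$ random, $\mathcal{F}_k=\{x_0,\xi_0,\dots,\xi_{k-1}\}$, $\mathbb{E}[w_k\mid\mathcal{F}_k]=0$. Cascading steplength scheme: let $q(\gamma)=1-\eta\gamma(2-L\gamma)$, $\theta\in(0,1)$, and an initial $\gamma\in(0,\frac2L)$. Initialization: let $\ell=\min\{j: D^2>\frac{\gamma^2\theta^{2j}\nu^2}{1-q(\gamma\theta^j)}\}$, $\gamma_0=\gamma\theta^\ell$, $q_0=q(\gamma_0)$, $K_0=\max\{k\in\mathbb{Z}_+: q_0^kD^2>\frac{\gamma_0^2\nu^2}{1-q_0}\}$, $\bar K_{-1}=0$.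 For $t\ge1$: $\gamma_t=\theta\gamma_{t-1}$, $q_t=q(\gamma_t)$, and $K_t=\max\{k\in\mathbb{Z}_+: q_t^k\,2^t\big(\prod_{j=0}^{t-1}q_j^{K_j}\big)D^2>\frac{\gamma_t^2\nu^2}{1-q_t}\}$. With $\bar K_t=\sum_{j=0}^tK_j$, the stepsize is $\gamma_k=\gamma_t$ for $k=\bar K_{t-1}+1,\dots,\bar K_t$. *)

(* Defs.v *)
From HB Require Import structures.
From mathcomp Require Import all_boot all_order all_algebra.
From mathcomp Require Import all_classical all_reals all_analysis.
Set Implicit Arguments. Unset Strict Implicit. Unset Printing Implicit Defensive.
Import Order.TTheory GRing.Theory Num.Theory.
Import numFieldNormedType.Exports.
Local Open Scope classical_set_scope.
Local Open Scope ring_scope.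

Definition dotv {R : realType} {n : nat} (u v : 'rV[R]_n) : R :=
  \sum_(i < n) u 0 i * v 0 i.
Definition enorm {R : realType} {n : nat} (u : 'rV[R]_n) : R :=
  Num.sqrt (dotv u u).

Definition convex_setv {R : realType} {n : nat} (X : set 'rV[R]_n) : Prop :=
  forall x y (lam : R), X x -> X y -> 0 <= lam -> lam <= 1 ->
    X (lam *: x + (1 - lam) *: y).

Definition strongly_convex_on {R : realType} {n : nat}
    (X : set 'rV[R]_n) (f : 'rV[R]_n -> R) (eta : R) : Prop :=
  forall x y (lam : R), X x -> X y -> 0 <= lam -> lam <= 1 ->
    f (lam *: x + (1 - lam) *: y) <=
      lam * f x + (1 - lam) * f y - eta / 2 * lam * (1 - lam) * enorm (x - y) ^+ 2.

Definition qfun {R : realType} (eta L g : R) : R := 1 - eta * g * (2 - L * g).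

Definition ell_cond {R : realType} (eta L nu D gamma theta : R) (j : nat) : Prop :=
  gamma ^+ 2 * theta ^+ (2 * j) * nu ^+ 2 / (1 - qfun eta L (gamma * theta ^+ j))
    < D ^+ 2.

(* For t = 0 (2^0 = 1, empty product) this is exactly the condition defining K_0. *)
Definition K_cond {R : realType} (eta L nu D gamma0 theta : R) (K : nat -> nat)
    (t k : nat) : Prop :=
  let gt := gamma0 * theta ^+ t in
  let qt := qfun eta L gt in
  gt ^+ 2 * nu ^+ 2 / (1 - qt) <
    qt ^+ k * 2%:R ^+ t *
      (\prod_(j < t) qfun eta L (gamma0 * theta ^+ j) ^+ K j) * D ^+ 2.

Definition is_min_nat (P : nat -> Prop) (m : nat) : Prop :=
  P m /\ forall j, P j -> (m <= j)%N.
Definition is_max_nat (P : nat -> Prop) (m : nat) : Prop :=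
  P m /\ forall k, P k -> (k <= m)%N.

(* Main.v *)
From HB Require Import structures.
From mathcomp Require Import all_boot all_order all_algebra.
From mathcomp Require Import all_classical all_reals all_analysis.
From mathcomp Require Import ring lra.
Require Import Defs.
Import Order.TTheory GRing.Theory Num.Theory.
Import numFieldNormedType.Exports.
Local Open Scope classical_set_scope.
Local Open Scope ring_scope.
Lemma deriv_le (R : realType) (V : normedModType R) (f : V -> R) (x v : V) (a b : R) :
  differentiable f x ->
  (forall t, 0 < t -> t <= 1 -> t^-1 * (f (t *: v + x) - f x) <= a + b * t) ->
  'd f x v <= a.
Proof.
move=> df H.
rewrite -deriveE //.
have dv := diff_derivable (v:=v) df.
have c1 : (fun h : R => h^-1 *: ((f \o shift x) (h *: v) - f x)) @ 0^' --> 'D_v f x.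
  exact: dv.
have c2 : (fun h : R => h^-1 *: ((f \o shift x) (h *: v) - f x)) @ 0^'+ --> 'D_v f x.
  apply: cvg_trans c1; apply: cvg_app; apply: within_subset => t /= ht; rewrite gt_eqF.
  by [].
  done.
have c3 : (fun t : R => a + b * t) @ 0^'+ --> a.
  apply: cvg_at_right_filter.
  have h : (fun t : R => a + b * t) @ 0 --> a + b * 0.
    apply: cvgD; first exact: cvg_cst.
    apply: cvgMr; exact: cvg_id.
  by rewrite mulr0 addr0 in h.
apply: (ler_cvg_to c2 c3).
near=> t.
rewrite /=; apply: H.
- by near: t; exact: nbhs_right_gt.
- by near: t; apply: nbhs_right_le; exact: ltr01.
Unshelve. all: by end_near. Qed.

Lemma enorm_sq (R : realType) (n : nat) (u : 'rV[R]_n) :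
  enorm u ^+ 2 = \sum_(i < n) u 0 i ^+ 2.
Proof.
rewrite /enorm sqr_sqrtr /dotv; last by apply: sumr_ge0 => i _; rewrite -expr2 sqr_ge0.
by apply: eq_bigr => i _; rewrite expr2.
Qed.

Lemma strong_grad (R : realType) (n : nat) (X : set 'rV[R]_n) (f : 'rV[R]_n -> R)
  (gradf : 'rV[R]_n -> 'rV[R]_n) (eta : R) x y :
  (forall x, X x -> differentiable f x /\ forall h, 'd f x h = dotv (gradf x) h) ->
  strongly_convex_on X f eta -> X x -> X y ->
  dotv (gradf x) (y - x) <= f y - f x - eta / 2 * enorm (y - x) ^+ 2.
Proof.
move=> Hd Hsc Xx Xy.
have [dfx Hdx] := Hd x Xx.
rewrite -Hdx.
apply: (@deriv_le _ _ f x (y - x) _ (eta / 2 * enorm (y - x) ^+ 2)) => // t t0 t1.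
have := Hsc y x t Xy Xx (ltW t0) t1.
have -> : t *: (y - x) + x = t *: y + (1 - t) *: x.
  by rewrite scalerBr scalerBl scale1r addrA addrAC.
set N := enorm (y - x) ^+ 2.
set fp := f _ => H.
rewrite mulrC ler_pdivrMr //.
nra.
Qed.

Lemma eta_le_L (R : realType) (n : nat) (X : set 'rV[R]_n) (f : 'rV[R]_n -> R)
  (gradf : 'rV[R]_n -> 'rV[R]_n) (eta L : R) x y :
  (forall x, X x -> differentiable f x /\ forall h, 'd f x h = dotv (gradf x) h) ->
  (forall x y, X x -> X y -> enorm (gradf x - gradf y) <= L * enorm (x - y)) ->
  strongly_convex_on X f eta -> X x -> X y -> 0 < enorm (x - y) -> 0 < L ->
  eta <= L.
Proof.
move=> Hd HL Hsc Xx Xy Np Lp.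
have h1 := @strong_grad _ _ _ _ _ _ x y Hd Hsc Xx Xy.
have h2 := @strong_grad _ _ _ _ _ _ y x Hd Hsc Xy Xx.
have h3 := HL x y Xx Xy.
set Sdd := \sum_(i < n) (x 0 i - y 0 i) ^+ 2.
set Sgg := \sum_(i < n) (gradf x 0 i - gradf y 0 i) ^+ 2.
set Sgd := \sum_(i < n) (gradf x 0 i - gradf y 0 i) * (x 0 i - y 0 i).
have E1 : enorm (x - y) ^+ 2 = Sdd.
  by rewrite enorm_sq; apply: eq_bigr => i _; rewrite !mxE.
have E2 : enorm (y - x) ^+ 2 = Sdd.
  by rewrite enorm_sq; apply: eq_bigr => i _; rewrite !mxE; ring.
have E3 : enorm (gradf x - gradf y) ^+ 2 = Sgg.
  by rewrite enorm_sq; apply: eq_bigr => i _; rewrite !mxE.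
have E4 : dotv (gradf x) (y - x) + dotv (gradf y) (x - y) = - Sgd.
  rewrite /dotv -big_split /= /Sgd -sumrN; apply: eq_bigr => i _; rewrite !mxE; ring.
have E5 : \sum_(i < n) (gradf x 0 i - gradf y 0 i - L * (x 0 i - y 0 i)) ^+ 2
          = Sgg - 2 * L * Sgd + L ^+ 2 * Sdd.
  rewrite /Sgg /Sgd /Sdd mulr_sumr mulr_sumr -sumrB -big_split /=.
  by apply: eq_bigr => i _; ring.
have P5 : 0 <= \sum_(i < n) (gradf x 0 i - gradf y 0 i - L * (x 0 i - y 0 i)) ^+ 2.
  by apply: sumr_ge0 => i _; rewrite sqr_ge0.
rewrite E5 in P5.
have g0 : 0 <= enorm (gradf x - gradf y) by apply: sqrtr_ge0.
have N0 : 0 <= enorm (x - y) by apply: sqrtr_ge0.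
have Sgg_le : Sgg <= L ^+ 2 * Sdd.
  rewrite -E3 -E1; nra.
have Sdd_pos : 0 < Sdd by rewrite -E1 exprn_gt0.
rewrite E1 E2 in h1 h2.
have Sgd_ge : eta * Sdd <= Sgd by nra.
have H1 : L * Sgd <= L ^+ 2 * Sdd by lra.
have H2 : L * (eta * Sdd) <= L * Sgd by rewrite ler_pM2l.
have H3 : (L * eta) * Sdd <= (L * L) * Sdd by rewrite -mulrA -expr2; exact: le_trans H2 H1.
by move: H3; rewrite ler_pM2r // ler_pM2l.
Qed.

Lemma q_facts (R : realType) (eta L g : R) : 0 < eta -> eta <= L -> 0 < g -> L * g < 2 ->
  [/\ 1 - qfun eta L g = eta * g * (2 - L * g), 0 < 1 - qfun eta L g,
      0 <= qfun eta L g & qfun eta L g < 1].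
Proof.
move=> e0 eL g0 Lg.
have E : 1 - qfun eta L g = eta * g * (2 - L * g) by rewrite /qfun; ring.
have P : 0 < eta * g * (2 - L * g) by rewrite !mulr_gt0 // subr_gt0.
split => //; first by rewrite E.
- rewrite /qfun. have : eta * g * (eta * g) <= L * g * (eta * g).
    by rewrite ler_pM2r ?mulr_gt0 // ler_pM2r.
  have := sqr_ge0 (1 - eta * g). nra.
- by rewrite -subr_gt0 E.
Qed.

Lemma A_pos (R : realType) (eta L nu g : R) : 0 < eta -> eta <= L -> 0 < g -> L * g < 2 -> 0 < nu ->
  0 < g ^+ 2 * nu ^+ 2 / (1 - qfun eta L g).
Proof.
move=> e0 eL g0 Lg n0; have [_ P _ _] := @q_facts _ _ _ _ e0 eL g0 Lg.
by rewrite divr_gt0 // mulr_gt0 // exprn_gt0.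
Qed.

Lemma A_contr (R : realType) (eta L nu g th : R) : 0 < eta -> eta <= L -> 0 < g -> L * g < 2 ->
  0 < th -> th <= 1 ->
  (th * g) ^+ 2 * nu ^+ 2 / (1 - qfun eta L (th * g)) <= th * (g ^+ 2 * nu ^+ 2 / (1 - qfun eta L g)).
Proof.
move=> e0 eL g0 Lg t0 t1.
have tg0 : 0 < th * g by rewrite mulr_gt0.
have tLg : L * (th * g) < 2.
  have Lg0 : 0 < L * g by rewrite mulr_gt0 // (lt_le_trans e0 eL).
  have : th * (L * g) <= L * g by rewrite ger_pMl.
  rewrite mulrCA; lra.
have [E1 P1 _ _] := @q_facts _ _ _ _ e0 eL g0 Lg.
have [E2 P2 _ _] := @q_facts _ _ _ _ e0 eL tg0 tLg.
rewrite E1 E2.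
have -> : (th * g) ^+ 2 * nu ^+ 2 / (eta * (th * g) * (2 - L * (th * g)))
   = (th * g) * nu ^+ 2 / (eta * (2 - L * (th * g))).
  field. by rewrite !gt_eqF // subr_gt0.
have -> : g ^+ 2 * nu ^+ 2 / (eta * g * (2 - L * g)) = g * nu ^+ 2 / (eta * (2 - L * g)).
  field. by rewrite !gt_eqF // subr_gt0.
rewrite (mulrA th) (mulrA th) ler_pdivrMr ?mulr_gt0 ?subr_gt0 // [X in _ <= X]mulrAC ler_pdivlMr ?mulr_gt0 ?subr_gt0 //.
have n2 : 0 <= nu ^+ 2 by rewrite sqr_ge0.
have : th * g * (2 - L * g) <= th * g * (2 - L * (th * g)).
  rewrite ler_pM2l // lerD2l lerN2 mulrCA ger_pMl //.
  by rewrite mulr_gt0 // (lt_le_trans e0 eL).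
move=> H.
have -> : th * g * nu ^+ 2 * (eta * (2 - L * g)) = th * g * (2 - L * g) * (nu ^+ 2 * eta) by ring.
have -> : th * g * nu ^+ 2 * (eta * (2 - L * (th * g))) = th * g * (2 - L * (th * g)) * (nu ^+ 2 * eta) by ring.
by rewrite ler_wpM2r // mulr_ge0 // ltW.
Qed.


Lemma pow_small (R : realType) (q e : R) : 0 <= q -> q < 1 -> 0 < e -> exists k : nat, q ^+ k < e.
Proof.
move=> q0 q1 e0.
have hq : `|q| < 1 by rewrite ger0_norm.
have := @cvgr_lt _ _ _ _ _ _ (cvg_expr hq) e e0.
case=> N _ HN; exists N; apply: HN => /=; exact: leqnn.
Qed.

Lemma max_exists (P : nat -> Prop) : P 0%N -> (exists M, forall k, P k -> (k <= M)%N) ->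
  exists m, is_max_nat P m.
Proof.
move=> P0 [M HM].
have ex : exists i, (fun k => `[< P k >]) i by exists 0%N; apply/asboolP.
have ub : forall i, (fun k => `[< P k >]) i -> (i <= M)%N by move=> i /asboolP; exact: HM.
case: (ex_maxnP ex ub) => m /asboolP Pm Hm; exists m; split => // k Pk; apply: Hm; exact/asboolP.
Qed.

Lemma min_exists (P : nat -> Prop) : (exists j, P j) -> exists m, is_min_nat P m.
Proof.
move=> [j Pj].
have ex : exists i, (fun k => `[< P k >]) i by exists j; apply/asboolP.
case: (ex_minnP ex) => m /asboolP Pm Hm; exists m; split => // k Pk; apply: Hm; exact/asboolP.
Qed.

Lemma bound_k (R : realType) (q A C : R) : 0 <= q -> q < 1 -> 0 < A ->
  exists M, forall k, A < q ^+ k * C -> (k <= M)%N.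
Proof.
move=> q0 q1 A0.
have [C0|C0] := leP C 0.
  exists 0%N => k H; exfalso.
  have : q ^+ k * C <= 0 by rewrite mulr_ge0_le0 // exprn_ge0.
  lra.
have [M HM] := @pow_small _ _ _ q0 q1 (divr_gt0 A0 C0).
exists M => k H; rewrite leqNgt; apply/negP => kM.
have : q ^+ k <= q ^+ M by apply: ler_wiXn2l => //; [exact: ltW | exact: ltnW].
move=> H2.
have : q ^+ k * C < A by rewrite -ltr_pdivlMr //; exact: le_lt_trans H2 HM.
lra.
Qed.

Lemma A_mono (R : realType) (eta L nu g th : R) : 0 < eta -> eta <= L -> 0 < g -> L * g < 2 ->
  0 < nu -> 0 < th -> th <= 1 ->
  (th * g) ^+ 2 * nu ^+ 2 / (1 - qfun eta L (th * g)) <= g ^+ 2 * nu ^+ 2 / (1 - qfun eta L g).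
Proof.
move=> e0 eL g0 Lg n0 t0 t1.
apply: le_trans (@A_contr _ _ _ _ _ _ e0 eL g0 Lg t0 t1) _.
rewrite ger_pMl //; exact: A_pos.
Qed.

Definition pick_max (P : nat -> Prop) : nat := xget 0%N (is_max_nat P).

Fixpoint Kseq (c : (nat -> nat) -> nat -> nat -> Prop) (T : nat) : seq nat :=
  if T is T'.+1 then rcons (Kseq c T') (pick_max (c (fun j => nth 0%N (Kseq c T') j) T'))
  else [::].

Lemma size_Kseq c T : size (Kseq c T) = T.
Proof. by elim: T => //= T IH; rewrite size_rcons IH. Qed.

Lemma Kseq_nth c T j : (j < T)%N -> nth 0%N (Kseq c T) j = nth 0%N (Kseq c j.+1) j.
Proof.
elim: T => // T IH jT.
rewrite [Kseq c T.+1]/= nth_rcons size_Kseq.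
case: (ltngtP j T) => [jlt|jgt|->].
- exact: IH.
- by exfalso; move: jT; rewrite ltnS leqNgt jgt.
- by rewrite /= nth_rcons size_Kseq ltnn eqxx.
Qed.

Lemma K_cond_ext (R : realType) (eta L nu D g0 theta : R) (K1 K2 : nat -> nat) t :
  (forall j, (j < t)%N -> K1 j = K2 j) ->
  K_cond eta L nu D g0 theta K1 t = K_cond eta L nu D g0 theta K2 t.
Proof.
move=> H; rewrite /K_cond; apply: funext => k /=.
by rewrite (eq_bigr (fun j : 'I_t => qfun eta L (g0 * theta ^+ j) ^+ K2 j)) // => j _; rewrite H.
Qed.

Theorem proposition6 (R : realType) (n : nat)
    (Dom X : set 'rV[R]_n) (f : 'rV[R]_n -> R) (gradf : 'rV[R]_n -> 'rV[R]_n)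
    (L eta D nu gamma theta : R) :
  open Dom -> X `<=` Dom -> X !=set0 -> closed X -> convex_setv X -> compact X ->
  (forall x, X x -> differentiable f x /\ forall h, 'd f x h = dotv (gradf x) h) ->
  (forall x y, X x -> X y -> enorm (gradf x - gradf y) <= L * enorm (x - y)) ->
  0 < eta -> strongly_convex_on X f eta ->
  (forall x y, X x -> X y -> enorm (x - y) <= D) ->
  (exists x y, X x /\ X y /\ enorm (x - y) = D) ->
  0 < D ->
  0 < nu ->
  0 < gamma -> gamma < 2 / L ->
  0 < theta -> theta < 1 ->
  exists ell : nat,
    is_min_nat (ell_cond eta L nu D gamma theta) ell /\
    exists K : nat -> nat,
      forall t : nat,
        is_max_nat (K_cond eta L nu D (gamma * theta ^+ ell) theta K t) (K t).
Proof.
move=> _ _ _ _ _ _ Hd HL e0 Hsc _ [x [y [Xx [Xy Nxy]]]] D0 n0 g0 gL th0 th1.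
have Lp : 0 < L.
  case: (ltP 0 L) => // L0; exfalso.
  have : 2 / L <= 0 by rewrite pmulr_rle0 // invr_le0.
  lra.
have eL : eta <= L.
  apply: (@eta_le_L _ _ X f gradf eta L x y) => //; by rewrite Nxy.
have Lg : gamma * L < 2 by rewrite -ltr_pdivlMr.
have g_ok : forall m, 0 < gamma * theta ^+ m /\ L * (gamma * theta ^+ m) < 2.
  move=> m; split; first by rewrite mulr_gt0 // exprn_gt0.
  have : theta ^+ m <= 1 by rewrite exprn_ile1 // ltW.
  have : 0 < theta ^+ m by rewrite exprn_gt0.
  nra.
pose A g := g ^+ 2 * nu ^+ 2 / (1 - qfun eta L g).
have Apos : forall m, 0 < A (gamma * theta ^+ m).
  move=> m; have [h1 h2] := g_ok m; exact: A_pos.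
have Acontr : forall m, A (gamma * theta ^+ m) <= theta ^+ m * A gamma.
  elim=> [|m IH]; first by rewrite expr0 mulr1 mul1r.
  have [h1 h2] := g_ok m.
  have -> : gamma * theta ^+ m.+1 = theta * (gamma * theta ^+ m) by rewrite exprSr mulrA mulrC.
  apply: le_trans (@A_contr _ _ _ nu _ _ e0 eL h1 h2 th0 (ltW th1)) _.
  by rewrite (exprS theta m) -[X in _ <= X]mulrA ler_pM2l.
have [ell [Hell Hmin]] : exists ell, is_min_nat (ell_cond eta L nu D gamma theta) ell.
  apply: min_exists.
  have A0 : 0 < A gamma by have := Apos 0%N; rewrite expr0 mulr1.
  have [j Hj] := @pow_small _ theta (D ^+ 2 / A gamma) (ltW th0) th1 (divr_gt0 (exprn_gt0 _ D0) A0).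
  exists j; rewrite /ell_cond.
  have -> : gamma ^+ 2 * theta ^+ (2 * j) = (gamma * theta ^+ j) ^+ 2 by rewrite exprMn -exprM mulnC.
  apply: le_lt_trans (Acontr j) _.
  by rewrite -ltr_pdivlMr.
exists ell; split; first by split.
set g0' := gamma * theta ^+ ell.
set c := K_cond eta L nu D g0' theta.
pose K := fun t => nth 0%N (Kseq c t.+1) t.
exists K.
have gt : forall t, g0' * theta ^+ t = gamma * theta ^+ (ell + t) by move=> t; rewrite exprD mulrA.
have cK : forall t, c K t = c (fun j => nth 0%N (Kseq c t) j) t.
  move=> t; apply: K_cond_ext => j jt; rewrite /K (@Kseq_nth c t j jt) //.
have Kt : forall t, K t = pick_max (c K t).
  by move=> t; rewrite /K /= nth_rcons size_Kseq ltnn eqxx cK.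
have ex_max : forall t, c K t 0%N -> is_max_nat (c K t) (K t).
  move=> t H0; rewrite Kt; apply: xgetPex; apply: max_exists => //.
  have [h1 h2] := g_ok (ell + t)%N.
  have [_ _ q0 q1] := @q_facts _ _ _ _ e0 eL h1 h2.
  have [M HM] := @bound_k _ _ _ (2%:R ^+ t * (\prod_(j < t) qfun eta L (g0' * theta ^+ j) ^+ K j) * D ^+ 2)
     q0 q1 (Apos (ell + t)%N).
  exists M => k Hk; apply: HM; move: Hk; rewrite /A /c /K_cond; cbv zeta; rewrite gt !mulrA; exact.
elim=> [|t IH].
  apply: ex_max; rewrite /c /K_cond /= expr0 mulr1 big_ord0 !mul1r /g0'.
  by move: Hell; rewrite /ell_cond exprMn -exprM mulnC.
apply: ex_max.
have [IH1 _] := IH.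
move: IH1; rewrite /c /K_cond /= big_ord_recr /= expr0 mul1r.
have [h1 h2] := g_ok (ell + t)%N.
have AM := @A_mono _ _ _ nu _ theta e0 eL h1 h2 n0 th0 (ltW th1).
have Ap := Apos (ell + t)%N.
rewrite /A in AM Ap.
have -> : g0' * theta ^+ t.+1 = theta * (gamma * theta ^+ (ell + t)) by rewrite exprSr mulrA -gt mulrC mulrA.
rewrite gt.
set X1 := _ ^+ 2 * _ / _ in AM Ap *.
set X0 := _ ^+ 2 * _ / (1 - qfun _ _ (gamma * _)) in AM Ap *.
move=> H.
rewrite exprS.
set P := \prod_(i < t) _.
set Q := qfun _ _ _ ^+ K t.
have -> : 2%:R * 2%:R ^+ t * (P * Q) * D ^+ 2 = 2 * (Q * 2%:R ^+ t * P * D ^+ 2) by ring.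
move: H; rewrite -/P -/Q; lra.
Qed.
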